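(* Let $\dim V=2$ and assume $V$ is a quantum linear space, i.e. $p_{12}p_{21}=1$. Then $$\mathfrak{L}^-(V)=\operatorname{span}\big\{x_1,\;x_2,\;x_2^{\alpha_2}x_1^{\alpha_1}\ :\ 1\le\alpha_2<N_2,\ 1\le\alpha_1<N_1,\ \operatorname{ord}(p_{12})\nmid\alpha_2\ \text{or}\ \operatorname{ord}(p_{12})\nmid\alpha_1\big\},$$ where for $i=1,2$, $N_i:=\operatorname{ord}(p_{ii})$ if $1<\operatorname{ord}(p_{ii})<\infty$, and $N_i:=\infty$ if $p_{ii}=1$ or $p_{ii}$ is not a root of unity.
   Context: $V$ is a braided vector space of diagonal type over an algebraically closed field $F$ of characteristic $0$ with basis $x_1,x_2$, braiding $C(x_i\otimes x_j)=q_{ij}x_j\otimes x_i$, $p_{ij}:=q_{ij}$, and Nichols algebra $\mathfrak{B}(V)$. $\mathfrak{L}^-(V)$ is the Lie subalgebra of $\mathfrak{B}(V)$ generated by $V$ under the commutator $[a,b]^-=ab-ba$. $\operatorname{ord}(a)$ is the multiplicative order of $a\in F^*$ ($\infty$ if $a$ is not a root of unity), and by convention $\infty$ does not divide any integer. *)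

(* Defs.v *)
From HB Require Import structures.
From mathcomp Require Import all_boot all_order all_algebra all_field.
Set Implicit Arguments. Unset Strict Implicit. Unset Printing Implicit Defensive.
Import GRing.Theory.
Local Open Scope ring_scope.

Definition i1 : 'I_2 := ord0.
Definition i2 : 'I_2 := ord_max.

(* Words in the letters x1, x2 (tensor monomials of T(V)). *)
Definition word := seq 'I_2.

Fixpoint masks (n : nat) : seq bitseq :=
  if n is n'.+1 then [seq true :: m | m <- masks n'] ++ [seq false :: m | m <- masks n']
  else [:: [::]].

(* Braiding factor of a shuffle: positions with bit true come from the left
   factor u, positions with bit false from the right factor v; each time a
   letter x_j of v is placed to the left of a letter x_i of u we pick up
   c(x_i (x) x_j) = q_ij x_j (x) x_i. *)
Definition shuf_coef (F : nzRingType) (q : 'I_2 -> 'I_2 -> F) (w : word) (m : bitseq) : F :=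
  \prod_(a < size w) \prod_(b < a)
     (if nth false m a && ~~ nth false m b
      then q (nth ord0 w a) (nth ord0 w b) else 1).

(* Elements of the (completed) quantum shuffle algebra: coefficient functions
   on words. Quantum shuffle product (Rosso): *)
Definition shuf_mul (F : nzRingType) (q : 'I_2 -> 'I_2 -> F) (f g : word -> F) : word -> F :=
  fun w => \sum_(m <- masks (size w))
             shuf_coef q w m * f (mask m w) * g (mask (map negb m) w).

Definition shuf_one (F : nzRingType) : word -> F := fun w => if w == [::] then 1 else 0.

Definition gen (F : nzRingType) (i : 'I_2) : word -> F := fun w => if w == [:: i] then 1 else 0.

Definition shuf_pow (F : nzRingType) (q : 'I_2 -> 'I_2 -> F) (f : word -> F) (n : nat) : word -> F :=
  iter n (shuf_mul q f) (shuf_one F).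

Definition shuf_br (F : nzRingType) (q : 'I_2 -> 'I_2 -> F) (a b : word -> F) : word -> F :=
  fun w => shuf_mul q a b w - shuf_mul q b a w.

(* L^-(V): the Lie subalgebra (under [,]^-) generated by V = lspan{x1,x2}. *)
Inductive lie_gen (F : nzRingType) (q : 'I_2 -> 'I_2 -> F) : (word -> F) -> Prop :=
  | lie_x i : lie_gen q (gen F i)
  | lie_add a b : lie_gen q a -> lie_gen q b -> lie_gen q (fun w => a w + b w)
  | lie_scale (c : F) a : lie_gen q a -> lie_gen q (fun w => c * a w)
  | lie_br a b : lie_gen q a -> lie_gen q b -> lie_gen q (shuf_br q a b).

Inductive lspan (F : nzRingType) (S : (word -> F) -> Prop) : (word -> F) -> Prop :=
  | span0 : lspan S (fun _ => 0)
  | span_in a : S a -> lspan S a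
  | span_add a b : lspan S a -> lspan S b -> lspan S (fun w => a w + b w)
  | span_scale (c : F) a : lspan S a -> lspan S (fun w => c * a w).

Definition is_ord (F : nzRingType) (a : F) (n : nat) : Prop :=
  (0 < n)%N /\ a ^+ n = 1 /\ (forall m, (0 < m < n)%N -> a ^+ m <> 1).

(* ord(a) | k, with the convention that infinity divides nothing. *)
Definition ord_dvd (F : nzRingType) (a : F) (k : nat) : Prop :=
  exists n, is_ord a n /\ (n %| k)%N.

(* k < N(a), where N(a) = ord(a) if 1 < ord(a) < oo, and N(a) = oo otherwise. *)
Definition lt_N (F : nzRingType) (a : F) (k : nat) : Prop :=
  forall n, is_ord a n -> (1 < n)%N -> (k < n)%N.

(* Main.v *)
Require Import Defs.
From HB Require Import structures.
From mathcomp Require Import all_boot all_order all_algebra all_field.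
From mathcomp Require Import ring.
From Stdlib Require Import FunctionalExtensionality Classical.
Set Implicit Arguments. Unset Strict Implicit. Unset Printing Implicit Defensive.
Import GRing.Theory.
Local Open Scope ring_scope.

Lemma ord_of_pow (F : fieldType) (qq : F) k : (0 < k)%N -> qq ^+ k = 1 -> ord_dvd qq k.
Proof.
move=> k0 hk.
have ex : exists n, (0 < n)%N && (qq ^+ n == 1) by exists k; rewrite k0 hk eqxx.
case: (ex_minnP ex) => n /andP[n0 /eqP hn] hmin.
exists n; split.
  split; first done; split; first done.
  move=> m /andP[m0 mn] hm.
  have := hmin m; rewrite m0 hm eqxx => /(_ isT); by rewrite leqNgt mn.
have hmod : qq ^+ (k %% n) = 1.
  move: hk; by rewrite {1}(divn_eq k n) exprD (mulnC (k %/ n)%N) exprM hn expr1n mul1r.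
rewrite /dvdn; case e: (k %% n)%N => [|r] //.
have := hmin r.+1; rewrite -e hmod eqxx e /= => /(_ isT).
by rewrite -e leqNgt ltn_pmod.
Qed.

Lemma pow_of_ord (F : fieldType) (qq : F) k j : ord_dvd qq k -> qq ^+ (j * k) = 1.
Proof.
case=> n [[n0 [hn _]] dv].
by rewrite -(divnK dv) mulnA mulnC exprM hn expr1n.
Qed.

Section S.
Variable F : fieldType.
Variable q : 'I_2 -> 'I_2 -> F.

Definition D (i : 'I_2) (f : word -> F) : word -> F := fun w => f (i :: w).
Definition chi (i : 'I_2) (u : word) : F := \prod_(k <- u) q k i.
Definition tau (i : 'I_2) (f : word -> F) : word -> F := fun w => chi i w * f w.

Lemma coefE w m : shuf_coef q w m = \prod_(0 <= a < size w) \prod_(0 <= b < a)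
     (if nth false m a && ~~ nth false m b
      then q (nth ord0 w a) (nth ord0 w b) else 1).
Proof. rewrite /shuf_coef big_mkord; apply eq_bigr => a _; by rewrite big_mkord. Qed.

Lemma prod_mask (G : 'I_2 -> F) (w : word) (m : bitseq) :
  \prod_(0 <= a < size w) (if nth false m a then G (nth ord0 w a) else 1) = \prod_(k <- mask m w) G k.
Proof.
elim: w m => [|x w IH] m /=.
  by rewrite big_geq //; case: m => [|[] m]; rewrite /= big_nil.
case: m => [|b m].
  by rewrite big1 ?big_nil // => a _; rewrite nth_nil.
rewrite big_nat_recl //=; case: b => /=; by rewrite ?big_cons -IH ?mul1r.
Qed.

Lemma coef_true i w m : shuf_coef q (i :: w) (true :: m) = shuf_coef q w m.
Proof.
rewrite !coefE /= big_nat_recl // big_geq // mul1r.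
apply: eq_bigr => a _; rewrite big_nat_recl //= andbF mul1r //.
Qed.

Lemma coef_false i w m : shuf_coef q (i :: w) (false :: m) = chi i (mask m w) * shuf_coef q w m.
Proof.
rewrite !coefE /= big_nat_recl // big_geq // mul1r /chi -prod_mask -big_split /=.
apply: eq_bigr => a _; rewrite big_nat_recl //= andbT //.
Qed.

Lemma mul_nil f g : shuf_mul q f g [::] = f [::] * g [::].
Proof. by rewrite /shuf_mul /= big_cons big_nil /shuf_coef big1 ?mul1r ?addr0 // => -[]. Qed.

Lemma mul_cons f g i w : shuf_mul q f g (i :: w) = shuf_mul q (D i f) g w + shuf_mul q (tau i f) (D i g) w.
Proof.
rewrite /shuf_mul /= big_cat !big_map /=; congr (_ + _); apply: eq_bigr => m _.
  by rewrite coef_true.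
by rewrite coef_false /tau /D !mulrA (mulrC (chi _ _)).
Qed.

Definition zf : word -> F := fun _ => 0.

Lemma mul0f g : shuf_mul q zf g = zf.
Proof. apply: functional_extensionality => w; rewrite /shuf_mul big1 // => m _; by rewrite /zf mulr0 mul0r. Qed.
Lemma mulf0 g : shuf_mul q g zf = zf.
Proof. apply: functional_extensionality => w; rewrite /shuf_mul big1 // => m _; by rewrite /zf mulr0. Qed.

Lemma mulZl c f g w : shuf_mul q (fun u => c * f u) g w = c * shuf_mul q f g w.
Proof. rewrite /shuf_mul mulr_sumr; apply: eq_bigr => m _; ring. Qed.
Lemma mulZr c f g w : shuf_mul q f (fun u => c * g u) w = c * shuf_mul q f g w.
Proof. rewrite /shuf_mul mulr_sumr; apply: eq_bigr => m _; ring. Qed.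
Lemma mulDl f1 f2 g w : shuf_mul q (fun u => f1 u + f2 u) g w = shuf_mul q f1 g w + shuf_mul q f2 g w.
Proof. rewrite /shuf_mul -big_split; apply: eq_bigr => m _ /=; ring. Qed.
Lemma mulDr f g1 g2 w : shuf_mul q f (fun u => g1 u + g2 u) w = shuf_mul q f g1 w + shuf_mul q f g2 w.
Proof. rewrite /shuf_mul -big_split; apply: eq_bigr => m _ /=; ring. Qed.

Lemma D_one i : D i (shuf_one F) = zf.
Proof. by apply: functional_extensionality => w. Qed.
Lemma tau_one i : tau i (shuf_one F) = shuf_one F.
Proof.
apply: functional_extensionality => -[|x w]; rewrite /tau /shuf_one /=.
  by rewrite /chi big_nil mul1r.
by rewrite mulr0.
Qed.

Lemma mul1f g : shuf_mul q (shuf_one F) g = g.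
Proof.
apply: functional_extensionality => w; elim: w g => [|i w IH] g.
  by rewrite mul_nil /shuf_one /= mul1r.
by rewrite mul_cons D_one mul0f tau_one IH /zf add0r.
Qed.
Lemma mulf1 g : shuf_mul q g (shuf_one F) = g.
Proof.
apply: functional_extensionality => w; elim: w g => [|i w IH] g.
  by rewrite mul_nil /shuf_one /= mulr1.
by rewrite mul_cons D_one mulf0 IH /zf addr0.
Qed.

Lemma D_gen i j : D i (gen F j) = if i == j then shuf_one F else zf.
Proof.
apply: functional_extensionality => w; rewrite /D /gen /shuf_one eqseq_cons.
by case: (i == j).
Qed.
Lemma tau_gen i j : tau i (gen F j) = fun w => q j i * gen F j w.
Proof.
apply: functional_extensionality => w; rewrite /tau /gen.
case: eqP => [->|]; last by rewrite !mulr0.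
by rewrite /chi big_seq1 !mulr1.
Qed.

Fixpoint qint (x : F) (n : nat) : F := if n is m.+1 then 1 + x * qint x m else 0.
Fixpoint qfact (x : F) (n : nat) : F := if n is m.+1 then qint x m.+1 * qfact x m else 1.

Lemma qintD x a c : qint x (a + c) = qint x a + x ^+ a * qint x c.
Proof. elim: a => [|a IH] /=; first by rewrite add0r expr0 mul1r. rewrite IH exprS; ring. Qed.

Lemma qint_sub x n : (x - 1) * qint x n = x ^+ n - 1.
Proof.
elim: n => [|n IH] /=; first by rewrite mulr0 expr0 subrr.
have -> : (x - 1) * (1 + x * qint x n) = (x - 1) + x * ((x - 1) * qint x n) by ring.
rewrite IH exprS; ring.
Qed.

Definition pw (j : 'I_2) (n : nat) := shuf_pow q (gen F j) n.

Lemma pwS j n : pw j n.+1 = shuf_mul q (gen F j) (pw j n).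
Proof. by []. Qed.

Lemma pw_nil j n : pw j n [::] = (n == 0)%:R.
Proof. case: n => [|n]; first by []. by rewrite pwS mul_nil /gen /= mul0r. Qed.

Lemma qint_pw j n w : qint (q j j) n * shuf_mul q (gen F j) (pw j n.-1) w = qint (q j j) n * pw j n w.
Proof. by case: n => [|n]; rewrite /= ?mul0r. Qed.

Lemma D_pw i j n : D i (pw j n) = fun w => (if i == j then qint (q j j) n else 0) * pw j n.-1 w.
Proof.
elim: n => [|n IH].
  apply: functional_extensionality => w; rewrite /pw /= D_one /zf; by case: (i == j); rewrite mul0r.
apply: functional_extensionality => w.
rewrite [LHS]/D pwS mul_cons D_gen tau_gen IH mulZl mulZr.
case: (eqVneq i j) => [->|ne].
  by rewrite mul1f /= mulrA -mulrA qint_pw; ring.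
by rewrite (mul0f (pw j n)) /zf !mul0r mulr0 add0r.
Qed.

Lemma pwE j n w : pw j n w = if w == nseq n j then qfact (q j j) n else 0.
Proof.
elim: w n => [|i w IH] n.
  by rewrite pw_nil; case: n.
have -> : pw j n (i :: w) = D i (pw j n) w by [].
rewrite D_pw IH.
case: (eqVneq i j) => [->|ne].
  case: n => [|n] /=; first by rewrite mul0r.
  rewrite eqseq_cons eqxx /=; case: (w == nseq n j); by rewrite ?mulr0.
case: n => [|n] /=; rewrite mul0r //.
by rewrite eqseq_cons (negbTE ne).
Qed.

Lemma chi_cons i k w : chi i (k :: w) = q k i * chi i w.
Proof. by rewrite /chi big_cons. Qed.

Lemma tau_pw i j n : tau i (pw j n) = fun w => q j i ^+ n * pw j n w.
Proof.
apply: functional_extensionality => w; rewrite /tau !pwE.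
case: eqP => [->|]; last by rewrite !mulr0.
congr (_ * _); elim: n => [|n IH]; first by rewrite /chi big_nil.
by rewrite /= chi_cons IH exprS.
Qed.

Definition P a b := shuf_mul q (pw i2 a) (pw i1 b).

Lemma n21 : (i2 == i1) = false. Proof. by []. Qed.
Lemma n12 : (i1 == i2) = false. Proof. by []. Qed.

Lemma ord2 (k : 'I_2) : k = i1 \/ k = i2.
Proof.
case: k => [[|[|n]] Hk]; [left|right|by []]; by apply: val_inj.
Qed.

Lemma D2P a b : D i2 (P a b) = fun w => qint (q i2 i2) a * P a.-1 b w.
Proof.
apply: functional_extensionality => w.
rewrite /D /P mul_cons !D_pw eqxx n21 tau_pw mulZl mulZr.
by rewrite mul0r addr0.
Qed.

Lemma D1P a b : D i1 (P a b) = fun w => (q i2 i1 ^+ a * qint (q i1 i1) b) * P a b.-1 w.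
Proof.
apply: functional_extensionality => w.
rewrite /D /P mul_cons !D_pw eqxx n12 tau_pw mulZl mulZr mulZl.
rewrite mul0r add0r; ring.
Qed.

Lemma P_nil a b : P a b [::] = ((a == 0) && (b == 0))%:R.
Proof. rewrite /P mul_nil !pw_nil; case: (a == 0); case: (b == 0); by rewrite /= ?mulr1 ?mulr0 ?mul0r. Qed.

Lemma P_cons k a b w : P a b (k :: w) = D k (P a b) w.
Proof. by []. Qed.

Lemma tau_P_pt i w a b : chi i w * P a b w = (q i2 i ^+ a * q i1 i ^+ b) * P a b w.
Proof.
elim: w a b => [|k w IH] a b.
  rewrite P_nil /chi big_nil mul1r.
  by case: a => [|a]; case: b => [|b]; rewrite /= ?mulr0 ?expr0 ?mulr1.
rewrite chi_cons P_cons.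
case: (ord2 k) => ->.
  rewrite D1P; case: b => [|b] /=; first by rewrite mulr0 !mul0r !mulr0.
  have H := IH a b.
  transitivity ((q i2 i1 ^+ a * (1 + q i1 i1 * qint (q i1 i1) b)) * q i1 i * (chi i w * P a b w)); first ring.
  rewrite H exprS; ring.
rewrite D2P; case: a => [|a] /=; first by rewrite !mul0r ?mulr0.
have H := IH a b.
transitivity ((1 + q i2 i2 * qint (q i2 i2) a) * q i2 i * (chi i w * P a b w)); first ring.
rewrite H exprS; ring.
Qed.

Lemma tau_P i a b : tau i (P a b) = fun w => (q i2 i ^+ a * q i1 i ^+ b) * P a b w.
Proof. apply: functional_extensionality => w; exact: tau_P_pt. Qed.


Hypothesis qls : q i1 i2 * q i2 i1 = 1.

Lemma q12_neq0 : q i1 i2 != 0.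
Proof. apply/eqP => h; move: qls; rewrite h mul0r => /eqP; by rewrite eq_sym oner_eq0. Qed.

Lemma q21E : q i2 i1 = (q i1 i2)^-1.
Proof. by rewrite -[q i2 i1]mul1r -(mulVf q12_neq0) -mulrA qls mulr1. Qed.

Lemma mulP w a b c d : shuf_mul q (P a b) (P c d) w = q i1 i2 ^+ (b * c) * P (a + c) (b + d) w.
Proof.
elim: w a b c d => [|k w IH] a b c d.
  rewrite mul_nil !P_nil.
  by case: a => [|a]; case: b => [|b]; case: c => [|c]; case: d => [|d];
    rewrite /= ?muln0 ?mul0n ?expr0 ?mulr1 ?mulr0 ?mul0r ?addnS ?addSn.
rewrite mul_cons P_cons tau_P.
case: (ord2 k) => ->.
  rewrite !D1P mulZl mulZr mulZl !IH qintD.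
  have nz : q i1 i2 != 0 := q12_neq0.
  case: b => [|b]; case: d => [|d];
    rewrite /= ?muln0 ?mul0n ?expr0 ?mulr1 ?mulr0 ?mul0r ?addnS ?addSn ?addn0 ?add0n /= ?mulSn ?exprD q21E ?exprVn; field; by rewrite ?expf_neq0.
rewrite !D2P mulZl mulZr mulZl !IH qintD.
case: a => [|a]; case: c => [|c];
  rewrite /= ?muln0 ?mul0n ?expr0 ?mulr1 ?mulr0 ?mul0r ?addnS ?addSn ?addn0 ?add0n /= ?mulnS ?exprD; ring.
Qed.


Notation x := (q i1 i2).

Lemma brP a b c d : shuf_br q (P a b) (P c d) = fun w => (x ^+ (b * c) - x ^+ (a * d)) * P (a + c) (b + d) w.
Proof.
apply: functional_extensionality => w.
by rewrite /shuf_br !mulP (addnC c a) (addnC d b) (mulnC d a) mulrBl.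
Qed.

Lemma gen1 : gen F i1 = P 0 1.
Proof. by rewrite /P /pw /= mulf1 mul1f. Qed.
Lemma gen2 : gen F i2 = P 1 0.
Proof. by rewrite /P /pw /= mulf1 mulf1. Qed.

Lemma brx1 a b : shuf_br q (gen F i1) (P a b) = fun w => (x ^+ a - 1) * P a b.+1 w.
Proof. by rewrite gen1 brP mul1n mul0n expr0 add0n add1n. Qed.
Lemma brx2 a b : shuf_br q (gen F i2) (P a b) = fun w => (1 - x ^+ b) * P a.+1 b w.
Proof. by rewrite gen2 brP mul1n mul0n expr0 add0n add1n. Qed.

Lemma lie_unscale K f : K != 0 -> lie_gen q (fun w => K * f w) -> lie_gen q f.
Proof.
move=> nz h; have := lie_scale K^-1 h.
have -> // : (fun w => K^-1 * (K * f w)) = f.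
by apply: functional_extensionality => w; rewrite mulKf.
Qed.

Lemma lie_brx1 a b : x ^+ a != 1 -> lie_gen q (P a b) -> lie_gen q (P a b.+1).
Proof.
move=> ne h; apply: (@lie_unscale (x ^+ a - 1)); first by rewrite subr_eq0.
rewrite -brx1; exact: lie_br (lie_x _ _) h.
Qed.
Lemma lie_brx2 a b : x ^+ b != 1 -> lie_gen q (P a b) -> lie_gen q (P a.+1 b).
Proof.
move=> ne h; apply: (@lie_unscale (1 - x ^+ b)); first by rewrite subr_eq0 eq_sym.
rewrite -brx2; exact: lie_br (lie_x _ _) h.
Qed.

Lemma lie_P11 : x != 1 -> lie_gen q (P 1 1).
Proof.
move=> ne; apply: lie_brx1; first by rewrite expr1.
rewrite -gen2; exact: lie_x.
Qed.

Lemma lie_P a b : (0 < a)%N -> (0 < b)%N -> (x ^+ a != 1) \/ (x ^+ b != 1) -> lie_gen q (P a b).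
Proof.
case: a => [|a] // _; case: b => [|b] // _.
have xne : forall k, x ^+ k != 1 -> x != 1.
  by move=> k; apply: contra => /eqP ->; rewrite expr1n.
case=> [ha|hb].
  have x1 := xne _ ha.
  have h1 : forall k, lie_gen q (P k.+1 1).
    elim=> [|k IH]; first exact: lie_P11.
    by apply: lie_brx2; rewrite ?expr1.
  elim: b => [|b IH]; first exact: h1.
  exact: lie_brx1.
have x1 := xne _ hb.
have h1 : forall m, lie_gen q (P 1 m.+1).
  elim=> [|m IH]; first exact: lie_P11.
  by apply: lie_brx1; rewrite ?expr1.
elim: a => [|a IH]; first exact: h1.
exact: lie_brx2.
Qed.

Lemma qint_ord (qq : F) n : is_ord qq n -> (1 < n)%N -> qint qq n = 0.
Proof.
case=> n0 [hn hm] n1.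
have ne : qq - 1 != 0.
  rewrite subr_eq0; apply/eqP => e; apply: (hm 1%N); first by rewrite n1.
  by rewrite expr1.
have := qint_sub qq n; rewrite hn subrr => /eqP; rewrite mulf_eq0 (negbTE ne) /=.
by move/eqP.
Qed.

Lemma qfact_ord (qq : F) n k : is_ord qq n -> (1 < n)%N -> (n <= k)%N -> qfact qq k = 0.
Proof.
move=> ho n1; elim: k => [|k IH]; first by rewrite leqn0 => /eqP e; move: n1; rewrite e.
rewrite leq_eqVlt => /orP[/eqP e|lt].
  by change (qint qq k.+1 * qfact qq k = 0); rewrite -e (qint_ord ho n1) mul0r.
by rewrite /= IH // mulr0.
Qed.

Lemma pw_zero j k : ~ lt_N (q j j) k -> pw j k = zf.
Proof.
move=> h.
have [n [ho [n1 nk]]] : exists n, is_ord (q j j) n /\ (1 < n)%N /\ (n <= k)%N.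
  apply: NNPP => hn; apply: h => n ho n1; rewrite ltnNge; apply/negP => nk.
  by apply: hn; exists n.
apply: functional_extensionality => w; rewrite pwE (qfact_ord ho n1 nk).
by case: (_ == _).
Qed.

Definition Tset (g : word -> F) : Prop :=
  g = gen F i1 \/ g = gen F i2 \/
  exists a2 a1 : nat,
    [/\ (1 <= a2)%N /\ lt_N (q i2 i2) a2, (1 <= a1)%N /\ lt_N (q i1 i1) a1,
        (~ ord_dvd (q i1 i2) a2 \/ ~ ord_dvd (q i1 i2) a1)
      & g = shuf_mul q (shuf_pow q (gen F i2) a2) (shuf_pow q (gen F i1) a1)].

Lemma span_zero f : (forall w, f w = 0) -> lspan Tset f.
Proof.
move=> h; have -> : f = fun _ => 0 by apply: functional_extensionality.
exact: span0.
Qed.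

Lemma T_P g : Tset g -> exists a b, g = P a b.
Proof.
case=> [->|[->|[a2 [a1 [_ _ _ ->]]]]].
- by exists 0%N, 1%N; rewrite gen1.
- by exists 1%N, 0%N; rewrite gen2.
- by exists a2, a1.
Qed.

Lemma br_T g h : Tset g -> Tset h -> lspan Tset (shuf_br q g h).
Proof.
move=> /T_P [a [b ->]] /T_P [c [d ->]]; rewrite brP.
set K := (x ^+ (b * c) - x ^+ (a * d)).
have Kz : K = 0 -> forall f, lspan Tset (fun w => K * f w).
  by move=> -> f; apply: span_zero => w; rewrite mul0r.
case A0 : (a + c)%N => [|A].
  apply: Kz; move/eqP: A0; rewrite addn_eq0 => /andP[/eqP e1 /eqP e2].
  by rewrite /K e1 e2 muln0 mul0n subrr.
case B0 : (b + d)%N => [|B].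
  apply: Kz; move/eqP: B0; rewrite addn_eq0 => /andP[/eqP e1 /eqP e2].
  by rewrite /K e1 e2 muln0 mul0n subrr.
have [lA|nlA] := classic (lt_N (q i2 i2) A.+1); last first.
  by apply: span_zero => w; rewrite /P pw_zero // mul0f /zf mulr0.
have [lB|nlB] := classic (lt_N (q i1 i1) B.+1); last first.
  by apply: span_zero => w; rewrite /P (pw_zero nlB) mulf0 /zf mulr0.
have [[dA dB]|nd] := classic (ord_dvd x A.+1 /\ ord_dvd x B.+1).
  apply: Kz; rewrite /K; apply/eqP; rewrite subr_eq0; apply/eqP.
  have nz : x ^+ (a * b) != 0 by rewrite expf_neq0 // q12_neq0.
  apply: (mulIf nz); rewrite -!exprD.
  have e1 : (b * c + a * b = b * A.+1)%N by rewrite -A0 mulnDr (mulnC a b) addnC.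
  have e2 : (a * d + a * b = a * B.+1)%N by rewrite -B0 mulnDr addnC.
  by rewrite e1 e2 !(pow_of_ord _ dA) !(pow_of_ord _ dB).
apply: span_scale; apply: span_in; right; right; exists A.+1, B.+1; split => //.
by apply: not_and_or.
Qed.

Lemma br0l g : shuf_br q (fun _ => 0) g = fun _ => 0.
Proof. apply: functional_extensionality => w; by rewrite /shuf_br (mul0f g) (mulf0 g) /zf subrr. Qed.
Lemma br0r g : shuf_br q g (fun _ => 0) = fun _ => 0.
Proof. apply: functional_extensionality => w; by rewrite /shuf_br (mul0f g) (mulf0 g) /zf subrr. Qed.
Lemma brDl f1 f2 g : shuf_br q (fun w => f1 w + f2 w) g = fun w => shuf_br q f1 g w + shuf_br q f2 g w.
Proof. apply: functional_extensionality => w; rewrite /shuf_br mulDl mulDr; ring. Qed.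
Lemma brDr f g1 g2 : shuf_br q f (fun w => g1 w + g2 w) = fun w => shuf_br q f g1 w + shuf_br q f g2 w.
Proof. apply: functional_extensionality => w; rewrite /shuf_br mulDl mulDr; ring. Qed.
Lemma brZl c f g : shuf_br q (fun w => c * f w) g = fun w => c * shuf_br q f g w.
Proof. apply: functional_extensionality => w; rewrite /shuf_br mulZl mulZr; ring. Qed.
Lemma brZr c f g : shuf_br q f (fun w => c * g w) = fun w => c * shuf_br q f g w.
Proof. apply: functional_extensionality => w; rewrite /shuf_br mulZl mulZr; ring. Qed.

Lemma span_brl f g : lspan Tset f -> Tset g -> lspan Tset (shuf_br q f g).
Proof.
move=> hf hg; elim: hf => [|a ha|a b _ IHa _ IHb|c a _ IHa].
- rewrite br0l; exact: span0.
- exact: br_T.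
- rewrite brDl; exact: span_add.
- rewrite brZl; exact: span_scale.
Qed.

Lemma span_br f g : lspan Tset f -> lspan Tset g -> lspan Tset (shuf_br q f g).
Proof.
move=> hf hg; elim: hg => [|a ha|a b _ IHa _ IHb|c a _ IHa].
- rewrite br0r; exact: span0.
- exact: span_brl.
- rewrite brDr; exact: span_add.
- rewrite brZr; exact: span_scale.
Qed.

Lemma main_iff f : lie_gen q f <-> lspan Tset f.
Proof.
split.
  elim=> [i|a b _ IHa _ IHb|c a _ IHa|a b _ IHa _ IHb].
  - apply: span_in; case: (ord2 i) => ->; [by left|by right; left].
  - exact: span_add.
  - exact: span_scale.
  - exact: span_br.
elim=> [|a ha|a b _ IHa _ IHb|c a _ IHa].
- have -> : (fun _ : word => 0 : F) = (fun w => 0 * gen F i1 w).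
    by apply: functional_extensionality => w; rewrite mul0r.
  exact: lie_scale (lie_x _ _).
- case: ha => [->|[->|[a2 [a1 [[h2 _] [h1 _] hd ->]]]]]; try exact: lie_x.
  apply: lie_P => //.
  case: hd => hd; [left|right]; apply/eqP => e; apply: hd; exact: ord_of_pow.
- exact: lie_add.
- exact: lie_scale.
Qed.

End S.

Theorem theorem6p7 (F : closedFieldType) (q : 'I_2 -> 'I_2 -> F)
  (charF0 : [pchar F] =i pred0)
  (q_neq0 : forall i j, q i j != 0)
  (qls : q i1 i2 * q i2 i1 = 1) :
  forall f : word -> F,
    lie_gen q f <->
    lspan (fun g : word -> F =>
            g = gen F i1 \/ g = gen F i2 \/
            exists a2 a1 : nat,
              [/\ (1 <= a2)%N /\ lt_N (q i2 i2) a2, (1 <= a1)%N /\ lt_N (q i1 i1) a1,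
                  (~ ord_dvd (q i1 i2) a2 \/ ~ ord_dvd (q i1 i2) a1)
                & g = shuf_mul q (shuf_pow q (gen F i2) a2) (shuf_pow q (gen F i1) a1)]) f.
Proof.
move=> f; exact: (main_iff qls f).
Qed.
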